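(* Let $Y$ be any uniformly monotone Banach function space. Then the pair $(c_0,Y)$ has the Bishop-Phelps-Bollobás property for positive operators. Moreover, the function $\eta$ in the definition of this property can be chosen depending only on the modulus of uniform monotonicity of $Y$.
   Context: All spaces are real; $c_0$ carries the sup norm and coordinatewise order. For a Banach space $X$, $B_X$ and $S_X$ denote the closed unit ball and unit sphere; $L(X,Y)$ is the space of bounded linear operators with the operator norm. An operator $T$ between Banach lattices is positive if $x\ge0$ implies $Tx\ge 0$. A Banach space $Y$ is a Banach function space on a measure space $(\Omega,\nu)$ if $Y$ is an ideal in the space $L^0(\nu)$ of (a.e. classes of) real measurable functions on $\Omega$ and $|x|\le|y|$ a.e. with $x,y\in Y$ implies $\Vert x\Vert\le\Vert y\Vert$. A Banach lattice $E$ is uniformly monotone if for every $\varepsilon>0$ there is $\delta(\varepsilon)>0$ (the modulus of uniform monotonicity) such that whenever $x\in S_E$, $y\in E$, $x,y\ge0$, and $\Vert x+y\Vert\le 1+\delta(\varepsilon)$, then $\Vert y\Vert\le\varepsilon$. A pair $(X,Y)$ of Banach lattices has the Bishop-Phelps-Bollobás property for positive operators if for every $0<\varepsilon<1$ there exists $0<\eta(\varepsilon)<\varepsilon$ such that for every positive $S\in S_{L(X,Y)}$ and every $x_0\in S_X$ with $\Vert S(x_0)\Vert>1-\eta(\varepsilon)$, there exist $u_0\in S_X$ and a positive operator $T\in S_{L(X,Y)}$ with $\Vert T(u_0)\Vert=1$, $\Vert u_0-x_0\Vert<\varepsilon$ and $\Vert T-S\Vert<\varepsilon$. *)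

(* Defs.v *)
From HB Require Import structures.
From mathcomp Require Import all_boot all_order all_algebra.
From mathcomp Require Import all_classical all_reals all_analysis.
Set Implicit Arguments. Unset Strict Implicit. Unset Printing Implicit Defensive.
Import Order.TTheory GRing.Theory Num.Theory.
Import numFieldNormedType.Exports.
Local Open Scope classical_set_scope.
Local Open Scope ring_scope.

Definition c0 {R : realType} : set (nat -> R) :=
  [set x | (x : R^nat) @ \oo --> (0 : R)].

Definition c0norm {R : realType} (x : nat -> R) : R :=
  sup [set `|x n| | n in [set: nat]].

(* A Banach function space on (Omega, nu): a set [mem] of measurable
   functions (representatives of a.e.-classes in L^0(nu)) that is a linear
   subspace and an ideal of L^0(nu), with a lattice norm [nrm] (monotone for
   |x| <= |y| a.e., hence invariant under a.e. equality), which is a norm on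
   the a.e.-classes and is complete. *)
Record BFS (R : realType) (d : measure_display) (T : measurableType d)
    (mu : {measure set T -> \bar R}) := {
  bfs_mem : set (T -> R) ;
  bfs_nrm : (T -> R) -> R ;
  bfs_meas : forall f : T -> R, bfs_mem f -> measurable_fun [set: T] f ;
  bfs_mem0 : bfs_mem (fun _ => 0) ;
  bfs_memD : forall f g : T -> R, bfs_mem f -> bfs_mem g -> bfs_mem (fun w => f w + g w) ;
  bfs_memZ : forall (a : R) (f : T -> R), bfs_mem f -> bfs_mem (fun w => a * f w) ;
  bfs_ideal : forall f g : T -> R, bfs_mem g -> measurable_fun [set: T] f ->
      {ae mu, forall w, `|f w| <= `|g w|} -> bfs_mem f ;
  bfs_nrm_mono : forall f g : T -> R, bfs_mem f -> bfs_mem g ->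
      {ae mu, forall w, `|f w| <= `|g w|} -> bfs_nrm f <= bfs_nrm g ;
  bfs_nrm_ge0 : forall f : T -> R, bfs_mem f -> 0 <= bfs_nrm f ;
  bfs_nrm_eq0 : forall f : T -> R, bfs_mem f -> bfs_nrm f = 0 ->
      {ae mu, forall w, f w = 0} ;
  bfs_nrmZ : forall (a : R) (f : T -> R), bfs_mem f ->
      bfs_nrm (fun w => a * f w) = `|a| * bfs_nrm f ;
  bfs_nrmD : forall f g : T -> R, bfs_mem f -> bfs_mem g ->
      bfs_nrm (fun w => f w + g w) <= bfs_nrm f + bfs_nrm g ;
  bfs_complete : forall u : nat -> T -> R, (forall n, bfs_mem (u n)) ->
      (forall e : R, 0 < e -> exists N : nat, forall m n : nat, (N <= m)%N ->
          (N <= n)%N -> bfs_nrm (fun w => u m w - u n w) < e) ->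
      exists f, bfs_mem f /\ (forall e : R, 0 < e -> exists N : nat,
          forall n : nat, (N <= n)%N -> bfs_nrm (fun w => u n w - f w) < e)
}.

Arguments bfs_mem {R d T mu}.
Arguments bfs_nrm {R d T mu}.

(* Uniform monotonicity of Y with modulus delta (the lattice order of Y is
   the a.e. pointwise order). *)
Definition unif_monotone_with {R : realType} {d} {T : measurableType d}
    {mu : {measure set T -> \bar R}} (Y : BFS mu) (delta : R -> R) : Prop :=
  (forall e : R, 0 < e -> 0 < delta e) /\
  forall (e : R) (x y : T -> R), 0 < e ->
    bfs_mem Y x -> bfs_nrm Y x = 1 -> bfs_mem Y y ->
    {ae mu, forall w, 0 <= x w} -> {ae mu, forall w, 0 <= y w} ->
    bfs_nrm Y (fun w => x w + y w) <= 1 + delta e ->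
    bfs_nrm Y y <= e.

(* An operator is given by representatives: Op x : T -> R for x in c_0. *)
Definition is_op {R : realType} {d} {T : measurableType d}
    {mu : {measure set T -> \bar R}} (Y : BFS mu)
    (Op : (nat -> R) -> T -> R) : Prop :=
  (forall x, c0 x -> bfs_mem Y (Op x)) /\
  (forall (a b : R) x y, c0 x -> c0 y ->
     {ae mu, forall w, Op (fun n => a * x n + b * y n) w = a * Op x w + b * Op y w}) /\
  (exists M : R, forall x, c0 x -> bfs_nrm Y (Op x) <= M * c0norm x).

Definition is_pos_op {R : realType} {d} {T : measurableType d}
    {mu : {measure set T -> \bar R}} (Op : (nat -> R) -> T -> R) : Prop :=
  forall x, c0 x -> (forall n, 0 <= x n) -> {ae mu, forall w, 0 <= Op x w}.

Definition opnorm {R : realType} {d} {T : measurableType d}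
    {mu : {measure set T -> \bar R}} (Y : BFS mu)
    (Op : (nat -> R) -> T -> R) : R :=
  sup [set bfs_nrm Y (Op x) | x in [set x | c0 x /\ c0norm x <= 1]].

Definition BPBp_pos_with {R : realType} {d} {T : measurableType d}
    {mu : {measure set T -> \bar R}} (Y : BFS mu) (eta : R -> R) : Prop :=
  forall (e : R), 0 < e < 1 ->
  forall (S : (nat -> R) -> T -> R) (x0 : nat -> R),
    is_op Y S -> is_pos_op (mu := mu) S -> opnorm Y S = 1 ->
    c0 x0 -> c0norm x0 = 1 ->
    bfs_nrm Y (S x0) > 1 - eta e ->
    exists (u0 : nat -> R) (Op : (nat -> R) -> T -> R),
      c0 u0 /\ c0norm u0 = 1 /\
      is_op Y Op /\ is_pos_op (mu := mu) Op /\ opnorm Y Op = 1 /\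
      bfs_nrm Y (Op u0) = 1 /\
      c0norm (fun n => u0 n - x0 n) < e /\
      opnorm Y (fun x w => Op x w - S x w) < e.

(* Main.v *)
Require Import Defs.
From HB Require Import structures.
From mathcomp Require Import all_boot all_order all_algebra.
From mathcomp Require Import all_classical all_reals all_analysis.
From mathcomp Require Import ring lra.
Import Order.TTheory GRing.Theory Num.Theory.
Import numFieldNormedType.Exports.
Local Open Scope classical_set_scope.
Local Open Scope ring_scope.

Section C0.
Variable R : realType.
Implicit Types x y : nat -> R.

Lemma c0P x : c0 x <-> (forall e : R, 0 < e -> \forall n \near \oo, `|x n| < e).
Proof.
rewrite /c0 /=; split.
  by move=> /(cvgr0Pnorm_lt (F := \oo) x).
by move=> H; apply/(cvgr0Pnorm_lt (F := \oo) x).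
Qed.

Lemma c0_dom x y : c0 y -> (forall n, `|x n| <= `|y n|) -> c0 x.
Proof.
move=> /c0P Hy Hxy; apply/c0P => e e0.
by apply: filterS (Hy e e0) => n; apply: le_lt_trans.
Qed.

Lemma c0_0 : c0 (fun _ : nat => 0 : R).
Proof. by apply/c0P => e e0; apply: nearW => n; rewrite normr0. Qed.

Lemma c0D x y : c0 x -> c0 y -> c0 (fun n => x n + y n).
Proof.
move=> /c0P Hx /c0P Hy; apply/c0P => e e0.
have e20 : 0 < e / 2 by rewrite divr_gt0.
apply: filterS2 (Hx _ e20) (Hy _ e20) => n h1 h2.
apply: (le_lt_trans (ler_normD _ _)).
by rewrite [e](splitr e) ltrD.
Qed.

Lemma c0Z (a : R) x : c0 x -> c0 (fun n => a * x n).
Proof.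
move=> /c0P Hx; apply/c0P => e e0.
have a1 : 0 < `|a| + 1 by rewrite ltr_wpDl.
apply: filterS (Hx (e / (`|a| + 1)) (divr_gt0 e0 a1)) => n hn.
rewrite normrM (@le_lt_trans _ _ ((`|a| + 1) * `|x n|)) //.
  by rewrite ler_wpM2r // lerDl.
by rewrite -ltr_pdivlMl // mulrC.
Qed.

Lemma c0_abs x : c0 x -> c0 (fun n => `|x n|).
Proof. by move=> h; apply: c0_dom h _ => n; rewrite normr_id. Qed.

Lemma c0_bounded x : c0 x -> exists M : R, forall n, `|x n| <= M.
Proof.
move=> /c0P /(_ 1 ltr01) [N _ HN].
exists (\sum_(k < N) `|x k| + 1) => n.
case: (ltnP n N) => hn.
  rewrite (@le_trans _ _ (\sum_(k < N) `|x k|)) //; last by rewrite lerDl.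
  rewrite (bigD1 (Ordinal hn)) //=.
  by rewrite lerDl sumr_ge0.
by rewrite ltW // (lt_le_trans (HN n _)) // lerDr sumr_ge0.
Qed.

Lemma c0norm_ub x n : c0 x -> `|x n| <= c0norm x.
Proof.
move=> /c0_bounded [M HM]; apply: ub_le_sup.
  by exists M => _ [k _ <-].
by exists n.
Qed.

Lemma c0norm_le x (b : R) : (forall n, `|x n| <= b) -> c0norm x <= b.
Proof.
move=> H; apply: ge_sup; first by exists `|x 0%N|, 0%N.
by move=> _ [k _ <-].
Qed.

Lemma c0norm_ge0 x : c0 x -> 0 <= c0norm x.
Proof. by move=> h; exact: le_trans (normr_ge0 (x 0%N)) (c0norm_ub _ 0%N h). Qed.

End C0.
Arguments c0_dom {R x y}.
Arguments c0D {R x y}.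
Arguments c0Z {R} a {x}.
Arguments c0_abs {R x}.
Arguments c0_bounded {R x}.
Arguments c0norm_ub {R x} n.
Arguments c0norm_ge0 {R x}.

Section BFSlemmas.
Context {R : realType} {d : measure_display} {T : measurableType d}
  {mu : {measure set T -> \bar R}} {Y : BFS mu}.
Local Notation mem := (bfs_mem Y).
Local Notation nrm := (bfs_nrm Y).
Implicit Types f g : T -> R.

Lemma mfD {f g} : measurable_fun setT f -> measurable_fun setT g ->
  measurable_fun setT (fun w => f w + g w).
Proof. exact: measurable_realfun.measurable_funD. Qed.

Lemma mfM {f g} : measurable_fun setT f -> measurable_fun setT g ->
  measurable_fun setT (fun w => f w * g w).
Proof. exact: measurable_realfun.measurable_funM. Qed.

Lemma mf_abs {f} : measurable_fun setT f -> measurable_fun setT (fun w => `|f w|).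
Proof. move=> mf; exact: (measurableT_comp (@measurable_realfun.normr_measurable R _) mf). Qed.

Lemma ae_le_abs {f g} : mem g -> measurable_fun setT f ->
  {ae mu, forall w, `|f w| <= `|g w|} -> mem f /\ nrm f <= nrm g.
Proof.
move=> mg mf h; have mf' := bfs_ideal mg mf h.
by split=> //; apply: bfs_nrm_mono.
Qed.

Lemma nrm_le {f g} : mem f -> mem g -> (forall w, `|f w| <= `|g w|) -> nrm f <= nrm g.
Proof. by move=> mf mg h; apply: bfs_nrm_mono => //; apply: aeW. Qed.

Lemma nrm_ae_le {f g} : mem f -> mem g -> {ae mu, forall w, `|f w| <= `|g w|} -> nrm f <= nrm g.
Proof. by move=> mf mg h; apply: bfs_nrm_mono. Qed.

Lemma nrm_ae_eq {f g} : mem f -> mem g -> {ae mu, forall w, f w = g w} -> nrm f = nrm g.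
Proof.
move=> mf mg h; apply/le_anti/andP; split; apply: bfs_nrm_mono => //.
  by apply: filterS h => w e; rewrite e.
by apply: filterS h => w e; rewrite e.
Qed.

Lemma mem_abs {f} : mem f -> mem (fun w => `|f w|).
Proof.
move=> mf; apply: (bfs_ideal mf); first exact: mf_abs (bfs_meas mf).
by apply: aeW => w; rewrite normr_id.
Qed.

Lemma nrm_abs {f} : mem f -> nrm (fun w => `|f w|) = nrm f.
Proof.
move=> mf; apply/le_anti/andP; split; apply: nrm_le => //; try exact: mem_abs;
  by move=> w; rewrite normr_id.
Qed.

Lemma memN {f} : mem f -> mem (fun w => - f w).
Proof.
move=> mf; have := bfs_memZ (-1) mf.
by under [fun w => _]funext => w do rewrite mulN1r.
Qed.

Lemma memB {f g} : mem f -> mem g -> mem (fun w => f w - g w).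
Proof. by move=> mf mg; have h := bfs_memD mf (memN mg); exact: h. Qed.

Lemma nrmN {f} : mem f -> nrm (fun w => - f w) = nrm f.
Proof.
move=> mf; have := bfs_nrmZ (-1) mf.
under [fun w => _]funext => w do rewrite mulN1r.
by rewrite normrN normr1 mul1r.
Qed.

Lemma nrmB {f g} : mem f -> mem g -> nrm (fun w => f w - g w) <= nrm f + nrm g.
Proof.
move=> mf mg; rewrite -(nrmN mg).
exact: (bfs_nrmD mf (memN mg)).
Qed.

Lemma mem_mulp {p f : T -> R} : measurable_fun setT p -> (forall w, `|p w| <= 1) ->
  mem f -> mem (fun w => p w * f w) /\ nrm (fun w => p w * f w) <= nrm f.
Proof.
move=> mp hp mf; apply: ae_le_abs => //.
  exact: mfM mp (bfs_meas mf).
apply: aeW => w; rewrite normrM.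
by rewrite -[X in _ <= X]mul1r ler_wpM2r.
Qed.

Lemma aeS {P Q : T -> Prop} : {ae mu, forall w, P w} -> (forall w, P w -> Q w) ->
  {ae mu, forall w, Q w}.
Proof. by move=> h H; apply: filterS h. Qed.

Lemma aeS2 {P Q U : T -> Prop} : {ae mu, forall w, P w} -> {ae mu, forall w, Q w} ->
  (forall w, P w -> Q w -> U w) -> {ae mu, forall w, U w}.
Proof. by move=> h1 h2 H; apply: filterS2 h1 h2. Qed.

End BFSlemmas.
Section Ops.
Context {R : realType} {d : measure_display} {T : measurableType d}
  {mu : {measure set T -> \bar R}} {Y : BFS mu}.
Local Notation mem := (bfs_mem Y).
Local Notation nrm := (bfs_nrm Y).

Lemma opnorm_ub {S : (nat -> R) -> T -> R} {x} : is_op Y S -> c0 x -> c0norm x <= 1 ->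
  nrm (S x) <= opnorm Y S.
Proof.
move=> [_ [_ [M HM]]] cx nx; apply: ub_le_sup; last by exists x.
exists `|M| => _ [z [cz nz] <-].
apply: (le_trans (HM z cz)); rewrite (le_trans (ler_wpM2r _ (ler_norm M))) //.
  exact: c0norm_ge0.
by rewrite -[X in _ <= X]mulr1 ler_wpM2l.
Qed.

Lemma opnorm_le {S : (nat -> R) -> T -> R} {b : R} :
  (forall x, c0 x -> c0norm x <= 1 -> nrm (S x) <= b) -> opnorm Y S <= b.
Proof.
move=> H; apply: ge_sup.
  exists (nrm (S (fun _ => 0))), (fun _ => 0) => //.
  by split; [exact: c0_0 | apply: c0norm_le => n; rewrite normr0].
by move=> _ [z [cz nz] <-]; apply: H.
Qed.

Context {S : (nat -> R) -> T -> R} (hS : is_op Y S) (hP : is_pos_op (mu := mu) S).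

Lemma S_mem {x} : c0 x -> mem (S x).
Proof. by case: hS => h _; apply: h. Qed.

Lemma S_lin a b {x y} : c0 x -> c0 y ->
  {ae mu, forall w, S (fun n => a * x n + b * y n) w = a * S x w + b * S y w}.
Proof. by case: hS => _ [h _]; apply: h. Qed.

Lemma S_add {x y} : c0 x -> c0 y ->
  {ae mu, forall w, S (fun n => x n + y n) w = S x w + S y w}.
Proof.
move=> cx cy; have := S_lin 1 1 cx cy.
under [fun n => _ + _]funext => n do rewrite !mul1r.
by apply: filterS => w; rewrite !mul1r.
Qed.

Lemma S_scale a {x} : c0 x -> {ae mu, forall w, S (fun n => a * x n) w = a * S x w}.
Proof.
move=> cx; have := S_lin a 0 cx cx.
under [fun n => _ + _]funext => n do rewrite mul0r addr0.
by apply: filterS => w; rewrite mul0r addr0.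
Qed.

Lemma S_ge0 {x} : c0 x -> (forall n, 0 <= x n) -> {ae mu, forall w, 0 <= S x w}.
Proof. by move=> cx hx; apply: hP. Qed.

Lemma S_abs_le {x y} : c0 x -> c0 y -> (forall n, `|x n| <= y n) ->
  {ae mu, forall w, `|S x w| <= S y w}.
Proof.
move=> cx cy hxy.
have c1 : c0 (fun n => 1 * y n + (-1) * x n) by apply: c0D; apply: c0Z.
have c2 : c0 (fun n => 1 * y n + 1 * x n) by apply: c0D; apply: c0Z.
have p1 := S_ge0 c1 (fun n => _).
have p2 := S_ge0 c2 (fun n => _).
have l1 := S_lin 1 (-1) cy cx.
have l2 := S_lin 1 1 cy cx.
have q1 : {ae mu, forall w, 0 <= S (fun n => 1 * y n + (-1) * x n) w}.
  apply: p1 => n; have := hxy n; rewrite ler_norml => /andP[h1 h2]; lra.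
have q2 : {ae mu, forall w, 0 <= S (fun n => 1 * y n + 1 * x n) w}.
  apply: p2 => n; have := hxy n; rewrite ler_norml => /andP[h1 h2]; lra.
have r1 : {ae mu, forall w, 0 <= 1 * S y w + (-1) * S x w}.
  by apply: filterS2 q1 l1 => w /= h e; rewrite -e.
have r2 : {ae mu, forall w, 0 <= 1 * S y w + 1 * S x w}.
  by apply: filterS2 q2 l2 => w /= h e; rewrite -e.
apply: filterS2 r1 r2 => w /= e1 e2.
rewrite ler_norml; apply/andP; split; lra.
Qed.

End Ops.
Section Main.
Variables (R : realType) (d : measure_display) (T : measurableType d)
  (mu : {measure set T -> \bar R}) (Y : BFS mu).
Local Notation mem := (bfs_mem Y).
Local Notation nrm := (bfs_nrm Y).
Variables (S : (nat -> R) -> T -> R) (hS : is_op Y S) (hP : is_pos_op (mu := mu) S)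
  (hSn : opnorm Y S = 1).
Variables (x0 : nat -> R) (cx0 : c0 x0) (nx0 : c0norm x0 = 1).
Variables (rho : R) (rho0 : 0 < rho) (rho2 : 2 * rho <= 1).

Lemma le_fix (a b : R) : a <= b -> a <= b. Proof. by []. Qed.
Lemma lt_fix (a b : R) : a < b -> a < b. Proof. by []. Qed.
Ltac rl := (try apply: le_fix); (try apply: lt_fix); have := rho0; have := rho2; lra.

Let rho1 : 0 < 1 - rho. Proof. rl. Qed.

Definition Ap n : bool := 1 - rho < x0 n.
Definition Am n : bool := x0 n < rho - 1.
Definition rst (P : nat -> bool) (x : nat -> R) := fun n => if P n then x n else 0.
Definition xB (x : nat -> R) := fun n => if Ap n || Am n then 0 else x n.
Definition oAp := rst Ap (fun _ => 1).
Definition oAm := rst Am (fun _ => 1).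
Definition u0 := fun n => if Ap n then 1 else if Am n then -1 else x0 n.

Lemma x0_le1 n : `|x0 n| <= 1.
Proof. by rewrite -nx0; apply: c0norm_ub. Qed.

Lemma ApAm n : Ap n -> ~~ Am n.
Proof. rewrite /Ap /Am => h; rewrite -leNgt. rl. Qed.

Lemma c0_rst P {x} : c0 x -> c0 (rst P x).
Proof. by move=> cx; apply: c0_dom cx _ => n; rewrite /rst; case: (P n); rewrite ?normr0. Qed.

Lemma c0_xB {x} : c0 x -> c0 (xB x).
Proof. by move=> cx; apply: c0_dom cx _ => n; rewrite /xB; case: (_ || _); rewrite ?normr0. Qed.

Lemma dom_aux (z : nat -> R) : (forall n, `|z n| <= `|x0 n| / (1 - rho)) -> c0 z.
Proof.
move=> h; apply: (c0_dom (c0Z (1 - rho)^-1 cx0)) => n.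
have hi : 0 < (1 - rho)^-1 by rewrite invr_gt0.
by rewrite normrM (gtr0_norm hi) mulrC h.
Qed.

Lemma one_le_A n : Ap n || Am n -> 1 <= `|x0 n| / (1 - rho).
Proof.
move=> h; rewrite ler_pdivlMr ?rho1 // mul1r.
case/orP: h; rewrite /Ap /Am => h.
  by rewrite ger0_norm; rl.
by rewrite ltr0_norm; rl.
Qed.

Lemma c0_oAp : c0 oAp.
Proof.
apply: dom_aux => n; rewrite /oAp /rst; case E: (Ap n).
  by rewrite normr1 one_le_A ?E.
by rewrite normr0 divr_ge0 ?normr_ge0 // ltW ?rho1.
Qed.

Lemma c0_oAm : c0 oAm.
Proof.
apply: dom_aux => n; rewrite /oAm /rst; case E: (Am n).
  by rewrite normr1 one_le_A ?E ?orbT.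
by rewrite normr0 divr_ge0 ?normr_ge0 // ltW ?rho1.
Qed.

Lemma c0_u0 : c0 u0.
Proof.
apply: dom_aux => n; rewrite /u0; case E: (Ap n).
  by rewrite normr1 one_le_A ?E.
case F: (Am n).
  by rewrite normrN normr1 one_le_A ?F ?orbT.
rewrite ler_pdivlMr ?rho1 // ler_piMr ?normr_ge0 //; rl.
Qed.

Lemma u0_le1 n : `|u0 n| <= 1.
Proof.
rewrite /u0; case: (Ap n); first by rewrite normr1.
case: (Am n); first by rewrite normrN normr1.
exact: x0_le1.
Qed.

Lemma nu0 : c0norm u0 = 1.
Proof.
apply/le_anti/andP; split; first by apply: c0norm_le u0_le1.
have [M HM] := c0_bounded cx0.
have hs : has_sup [set `|x0 n| | n in [set: nat]].
  by split; [exists `|x0 0%N|, 0%N | exists M => _ [k _ <-]].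
have [_ [n _ <-]] := sup_adherent rho0 hs.
rewrite -/(c0norm x0) nx0 => hn.
have hA : Ap n || Am n.
  rewrite /Ap /Am; move: hn; case: (lerP 0 (x0 n)) => h.
    by rewrite ger0_norm // => h'; apply/orP; left.
  by rewrite ltr0_norm // => h'; apply/orP; right; rl.
apply: le_trans (c0norm_ub n c0_u0).
move: hA; rewrite /u0; case: (Ap n) => /=; first by rewrite normr1.
by move=> ->; rewrite normrN normr1.
Qed.

Lemma u0_x0 : c0norm (fun n => u0 n - x0 n) <= rho.
Proof.
apply: c0norm_le => n; have := x0_le1 n; rewrite /u0 /Ap /Am ler_norml => /andP[h1 h2].
case: ifPn => h3.
  by rewrite ger0_norm; rl.
case: ifPn => h4.
  by rewrite ler0_norm; rl.
by rewrite subrr normr0 ltW.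
Qed.


Definition g := S x0.
Definition p w : R := if 0 <= g w then 1 else 0.
Definition q w : R := if 0 <= g w then 0 else 1.
Definition hx x := fun w => p w * S (rst Ap x) w + q w * S (rst Am x) w.
Definition one := fun _ : nat => 1 : R.
Definition c := nrm (hx one).

Lemma mg : measurable_fun setT g.
Proof. exact: bfs_meas (S_mem hS cx0). Qed.

Lemma mp : measurable_fun setT p.
Proof.
rewrite /p; apply: measurable_fun_ifT.
- exact: measurable_realfun.measurable_fun_ler (measurable_cst _) mg.
- exact: measurable_cst.
- exact: measurable_cst.
Qed.

Lemma mq : measurable_fun setT q.
Proof.
rewrite /q; apply: measurable_fun_ifT.
- exact: measurable_realfun.measurable_fun_ler (measurable_cst _) mg.
- exact: measurable_cst.
- exact: measurable_cst.
Qed.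

Lemma p_bd w : `|p w| <= 1.
Proof. by rewrite /p; case: ifP; rewrite ?normr1 ?normr0. Qed.
Lemma q_bd w : `|q w| <= 1.
Proof. by rewrite /q; case: ifP; rewrite ?normr1 ?normr0. Qed.
Lemma p_ge0 w : 0 <= p w.
Proof. by rewrite /p; case: ifP. Qed.
Lemma q_ge0 w : 0 <= q w.
Proof. by rewrite /q; case: ifP. Qed.
Lemma pq w : p w + q w = 1.
Proof. by rewrite /p /q; case: ifP; rewrite ?addr0 ?add0r. Qed.

Lemma c0_one_Ap : c0 (rst Ap one). Proof. exact: c0_oAp. Qed.
Lemma c0_one_Am : c0 (rst Am one). Proof. exact: c0_oAm. Qed.

Lemma mem_pS {x} : c0 x -> mem (fun w => p w * S (rst Ap x) w).
Proof. by move=> cx; case: (mem_mulp mp p_bd (S_mem hS (c0_rst Ap cx))). Qed.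
Lemma mem_qS {x} : c0 x -> mem (fun w => q w * S (rst Am x) w).
Proof. by move=> cx; case: (mem_mulp mq q_bd (S_mem hS (c0_rst Am cx))). Qed.

Lemma mem_hx {x} : c0 x -> mem (hx x).
Proof. by move=> cx; have := bfs_memD (mem_pS cx) (mem_qS cx). Qed.

Lemma mem_hone : mem (hx one).
Proof.
have := bfs_memD (proj1 (mem_mulp mp p_bd (S_mem hS c0_oAp)))
  (proj1 (mem_mulp mq q_bd (S_mem hS c0_oAm))).
by [].
Qed.


Lemma rst_lin P a b x y :
  rst P (fun n => a * x n + b * y n) = fun n => a * rst P x n + b * rst P y n.
Proof. by apply: funext => n; rewrite /rst; case: (P n); rewrite ?mulr0 ?addr0. Qed.

Lemma hx_bound {x} : c0 x -> {ae mu, forall w, `|hx x w| <= c0norm x * hx one w}.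
Proof.
move=> cx; set r := c0norm x.
have r0 : 0 <= r by apply: c0norm_ge0.
have b1 : forall n, `|rst Ap x n| <= r * oAp n.
  by move=> n; rewrite /rst /oAp /rst; case: (Ap n); rewrite ?mulr1 ?c0norm_ub ?normr0 ?mulr0.
have b2 : forall n, `|rst Am x n| <= r * oAm n.
  by move=> n; rewrite /rst /oAm /rst; case: (Am n); rewrite ?mulr1 ?c0norm_ub ?normr0 ?mulr0.
have h1 := S_abs_le hS hP (c0_rst Ap cx) (c0Z r c0_oAp) b1.
have h2 := S_abs_le hS hP (c0_rst Am cx) (c0Z r c0_oAm) b2.
have h1' := S_scale hS r c0_oAp.
have h2' := S_scale hS r c0_oAm.
have k1 : {ae mu, forall w, `|S (rst Ap x) w| <= r * S oAp w}.
  by apply: filterS2 h1 h1' => w /= a b; rewrite -b.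
have k2 : {ae mu, forall w, `|S (rst Am x) w| <= r * S oAm w}.
  by apply: filterS2 h2 h2' => w /= a b; rewrite -b.
apply: filterS2 k1 k2 => w /= a b.
rewrite /hx (le_trans (ler_normD _ _)) // !normrM (ger0_norm (p_ge0 w)) (ger0_norm (q_ge0 w)).
rewrite mulrDr (mulrCA r) (mulrCA r (q w)).
by rewrite lerD // ler_wpM2l ?p_ge0 ?q_ge0.
Qed.

Lemma nrm_hx {x} : c0 x -> nrm (hx x) <= c0norm x * c.
Proof.
move=> cx; have r0 : 0 <= c0norm x by apply: c0norm_ge0.
rewrite /c -(ger0_norm r0) -bfs_nrmZ; last exact: mem_hone.
apply: nrm_ae_le; [exact: mem_hx | exact: bfs_memZ mem_hone |].
move: (hx_bound cx); apply: filterS => w /= h; exact: le_trans h (ler_norm _).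
Qed.

Lemma rst_u0_Ap : rst Ap u0 = oAp.
Proof. by apply: funext => n; rewrite /rst /oAp /rst /u0; case: (Ap n). Qed.

Lemma rst_u0_Am : rst Am u0 = fun n => -1 * oAm n.
Proof.
apply: funext => n; rewrite /rst /oAm /rst /u0; case E: (Am n).
  case F: (Ap n); last by rewrite mulr1.
  by have := ApAm n F; rewrite E.
by rewrite mulr0.
Qed.

Lemma hx_u0 : {ae mu, forall w, `|hx u0 w| = `|hx one w|}.
Proof.
apply: (aeS (S_scale hS (-1) c0_oAm)) => w /= e.
rewrite /hx rst_u0_Ap rst_u0_Am e /p /q; case: ifP => _.
  by rewrite !mul0r !addr0.
by rewrite !mul0r !add0r !mul1r mulN1r normrN.
Qed.

Lemma nrm_hu0 : nrm (hx u0) = c.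
Proof.
apply/le_anti/andP; split.
  by apply: (nrm_ae_le (mem_hx c0_u0) mem_hone); apply: (aeS hx_u0) => w /= ->.
by apply: (nrm_ae_le mem_hone (mem_hx c0_u0)); apply: (aeS hx_u0) => w /= ->.
Qed.

Lemma S_decomp {x} : c0 x ->
  {ae mu, forall w, S x w = S (rst Ap x) w + S (rst Am x) w + S (xB x) w}.
Proof.
move=> cx.
have E : (fun n => (rst Ap x n + rst Am x n) + xB x n) = x.
  apply: funext => n; rewrite /rst /xB; case F: (Ap n); case G: (Am n) => //=.
  - by have := ApAm n F; rewrite G.
  - by rewrite !addr0.
  - by rewrite add0r addr0.
  - by rewrite !add0r.
have := S_add hS (c0D (c0_rst Ap cx) (c0_rst Am cx)) (c0_xB cx).
rewrite E => h; apply: filterS2 h (S_add hS (c0_rst Ap cx) (c0_rst Am cx)).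
by move=> w /= -> ->.
Qed.

Lemma diff_eq {x} : c0 x -> {ae mu, forall w,
  hx x w - S x w = - (q w * S (rst Ap x) w + p w * S (rst Am x) w + S (xB x) w)}.
Proof.
move=> cx; apply: (aeS (S_decomp cx)) => w /= ->.
rewrite /hx; have e := pq w.
have -> : q w = 1 - p w by rewrite -e addrAC subrr add0r.
ring.
Qed.


Definition x0p := fun n => Num.max (x0 n) 0.
Definition x0m := fun n => Num.max (- x0 n) 0.
Definition ax0 := fun n => `|x0 n|.

Lemma max0_abs (a : R) : `|Num.max a 0| <= `|a|.
Proof. by rewrite maxEle; case: ifPn => h; rewrite ?normr0 ?normr_ge0. Qed.

Lemma c0_x0p : c0 x0p.
Proof. by apply: c0_dom cx0 _ => n; apply: max0_abs. Qed.
Lemma c0_x0m : c0 x0m.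
Proof. by apply: c0_dom (c0Z (-1) cx0) _ => n; rewrite mulN1r; apply: max0_abs. Qed.
Lemma c0_ax0 : c0 ax0.
Proof. exact: c0_abs cx0. Qed.

Lemma x0p_ge0 n : 0 <= x0p n.
Proof. by rewrite /x0p maxEle; case: ifPn => // h; rewrite ltW // ltNge. Qed.
Lemma x0m_ge0 n : 0 <= x0m n.
Proof. by rewrite /x0m maxEle; case: ifPn => // h; rewrite ltW // ltNge. Qed.

Lemma x0pm_sum n : x0p n + x0m n = ax0 n.
Proof.
rewrite /x0p /x0m /ax0 !maxEle; case: (leP (x0 n) 0) => h1; case: (leP (- x0 n) 0) => h2.
- by rewrite ler0_norm //; lra.
- by rewrite ler0_norm //; lra.
- by rewrite ger0_norm; lra.
- lra.
Qed.

Lemma x0pm_diff n : 1 * x0p n + (-1) * x0m n = x0 n.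
Proof.
rewrite /x0p /x0m !maxEle; case: (leP (x0 n) 0) => h1; case: (leP (- x0 n) 0) => h2; lra.
Qed.

Lemma g_split : {ae mu, forall w, g w = S x0p w - S x0m w}.
Proof.
have := S_lin hS 1 (-1) c0_x0p c0_x0m.
have -> : (fun n => 1 * x0p n + (-1) * x0m n) = x0 by apply: funext => n; apply: x0pm_diff.
by move=> h; apply: (aeS h) => w /=; rewrite /g => ->; rewrite mul1r mulN1r.
Qed.

Lemma sum_split : {ae mu, forall w, S ax0 w = S x0p w + S x0m w}.
Proof.
have := S_add hS c0_x0p c0_x0m.
have -> : (fun n => x0p n + x0m n) = ax0 by apply: funext => n; apply: x0pm_sum.
by [].
Qed.

Definition m1 := fun w => S x0p w + S x0m w.
Definition m2 := fun w => m1 w - `|g w|.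
Definition m := fun w => 2^-1 * m2 w.

Lemma mem_m : mem m.
Proof.
have h1 : mem m1 by apply: bfs_memD; apply: (S_mem hS); [exact: c0_x0p | exact: c0_x0m].
have h2 : mem m2 by apply: memB h1 (mem_abs (S_mem hS cx0)).
exact: bfs_memZ h2.
Qed.

Lemma Sx0p_ge0 : {ae mu, forall w, 0 <= S x0p w}.
Proof. by have := S_ge0 hP c0_x0p x0p_ge0. Qed.
Lemma Sx0m_ge0 : {ae mu, forall w, 0 <= S x0m w}.
Proof. by have := S_ge0 hP c0_x0m x0m_ge0. Qed.

Lemma m_ge0 : {ae mu, forall w, 0 <= m w}.
Proof.
apply: (aeS2 g_split (aeS2 Sx0p_ge0 Sx0m_ge0 (fun w a b => conj a b))) => w /= e [a b].
rewrite /m /m2 /m1 e; case: (lerP 0 (S x0p w - S x0m w)) => h.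
  by rewrite ger0_norm //; apply: mulr_ge0; lra.
by rewrite ltr0_norm //; apply: mulr_ge0; lra.
Qed.


Lemma oAp_x0p n : `|(1 - rho) * oAp n| <= x0p n.
Proof.
rewrite /oAp /rst /x0p maxEle; case E: (Ap n); last by rewrite mulr0 normr0; case: ifP => //; lra.
move: E; rewrite /Ap => E; rewrite mulr1 ger0_norm ?(ltW rho1) //.
by case: (leP (x0 n) 0) => h; rl.
Qed.

Lemma oAm_x0m n : `|(1 - rho) * oAm n| <= x0m n.
Proof.
rewrite /oAm /rst /x0m maxEle; case E: (Am n); last by rewrite mulr0 normr0; case: ifP => //; lra.
move: E; rewrite /Am => E; rewrite mulr1 ger0_norm ?(ltW rho1) //.
by case: (leP (- x0 n) 0) => h; rl.
Qed.

Lemma SoAp_x0p : {ae mu, forall w, (1 - rho) * S oAp w <= S x0p w}.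
Proof.
apply: (aeS2 (S_abs_le hS hP (c0Z (1 - rho) c0_oAp) c0_x0p oAp_x0p) (S_scale hS (1 - rho) c0_oAp)).
by move=> w h <-; apply: le_trans (ler_norm _) h.
Qed.

Lemma SoAm_x0m : {ae mu, forall w, (1 - rho) * S oAm w <= S x0m w}.
Proof.
apply: (aeS2 (S_abs_le hS hP (c0Z (1 - rho) c0_oAm) c0_x0m oAm_x0m) (S_scale hS (1 - rho) c0_oAm)).
by move=> w h <-; apply: le_trans (ler_norm _) h.
Qed.

Lemma qA_bound : {ae mu, forall w, (1 - rho) * (q w * S oAp w) <= m w}.
Proof.
apply: (aeS2 (aeS2 g_split m_ge0 (fun w a b => conj a b)) SoAp_x0p) => w [e h0] h.
move: h0; rewrite /q /m /m2 /m1; case: ifPn => hg.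
  by rewrite mul0r mulr0.
rewrite mul1r e ltr0_norm; last by rewrite -e ltNge.
move: h; set t := (1 - rho) * S oAp w => h _; lra.
Qed.

Lemma pA_bound : {ae mu, forall w, (1 - rho) * (p w * S oAm w) <= m w}.
Proof.
apply: (aeS2 (aeS2 g_split m_ge0 (fun w a b => conj a b)) SoAm_x0m) => w [e h0] h.
move: h0; rewrite /p /m /m2 /m1; case: ifPn => hg; last by rewrite mul0r mulr0.
rewrite mul1r e ger0_norm; last by rewrite -e.
move: h; set t := (1 - rho) * S oAm w => h _; lra.
Qed.


Lemma rst_le_one P x : c0norm x <= 1 -> c0 x -> forall n, `|rst P x n| <= rst P (fun _ => 1) n.
Proof.
move=> nx cx n; rewrite /rst; case: (P n); last by rewrite normr0.
exact: le_trans (c0norm_ub n cx) nx.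
Qed.

Lemma mem_qSAp {x} : c0 x -> mem (fun w => q w * S (rst Ap x) w).
Proof. by move=> cx; case: (mem_mulp mq q_bd (S_mem hS (c0_rst Ap cx))). Qed.
Lemma mem_pSAm {x} : c0 x -> mem (fun w => p w * S (rst Am x) w).
Proof. by move=> cx; case: (mem_mulp mp p_bd (S_mem hS (c0_rst Am cx))). Qed.

Lemma nrm_qSAp {x} : c0 x -> c0norm x <= 1 ->
  nrm (fun w => q w * S (rst Ap x) w) <= (1 - rho)^-1 * nrm m.
Proof.
move=> cx nx; have ri : 0 < (1 - rho)^-1 by rewrite invr_gt0.
rewrite -(gtr0_norm ri) -bfs_nrmZ; last exact: mem_m.
apply: (nrm_ae_le (mem_qSAp cx) (bfs_memZ _ mem_m)).
have h1 := S_abs_le hS hP (c0_rst Ap cx) c0_oAp (rst_le_one _ _ nx cx).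
apply: (aeS2 h1 qA_bound) => w a b.
rewrite normrM (ger0_norm (q_ge0 w)) (le_trans _ (ler_norm _)) //.
rewrite ler_pdivlMl ?rho1 // (le_trans _ b) // ler_wpM2l ?(ltW rho1) //.
by rewrite ler_wpM2l ?q_ge0.
Qed.

Lemma nrm_pSAm {x} : c0 x -> c0norm x <= 1 ->
  nrm (fun w => p w * S (rst Am x) w) <= (1 - rho)^-1 * nrm m.
Proof.
move=> cx nx; have ri : 0 < (1 - rho)^-1 by rewrite invr_gt0.
rewrite -(gtr0_norm ri) -bfs_nrmZ; last exact: mem_m.
apply: (nrm_ae_le (mem_pSAm cx) (bfs_memZ _ mem_m)).
have h1 := S_abs_le hS hP (c0_rst Am cx) c0_oAm (rst_le_one _ _ nx cx).
apply: (aeS2 h1 pA_bound) => w a b.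
rewrite normrM (ger0_norm (p_ge0 w)) (le_trans _ (ler_norm _)) //.
rewrite ler_pdivlMl ?rho1 // (le_trans _ b) // ler_wpM2l ?(ltW rho1) //.
by rewrite ler_wpM2l ?p_ge0.
Qed.

Definition zB x := fun n => `|xB x n|.

Lemma diff_bound {x} : c0 x -> c0norm x <= 1 ->
  nrm (fun w => hx x w - S x w) <= 2 * ((1 - rho)^-1 * nrm m) + nrm (S (zB x)).
Proof.
move=> cx nx.
have mA := mem_qSAp cx; have mB := mem_pSAm cx; have mC := S_mem hS (c0_xB cx).
have mAB : mem (fun w => q w * S (rst Ap x) w + p w * S (rst Am x) w) by have := bfs_memD mA mB.
have mABC : mem (fun w => q w * S (rst Ap x) w + p w * S (rst Am x) w + S (xB x) w).
  by have := bfs_memD mAB mC.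
rewrite (nrm_ae_eq (memB (mem_hx cx) (S_mem hS cx)) (memN mABC) (diff_eq cx)).
rewrite (nrmN mABC).
apply: le_trans (bfs_nrmD mAB mC) _.
rewrite mulr2n mulrDl mul1r; apply: lerD.
  apply: le_trans (bfs_nrmD mA mB) _.
  by apply: lerD; [exact: nrm_qSAp | exact: nrm_pSAm].
have czB : c0 (zB x) by apply: c0_abs (c0_xB cx).
apply: (nrm_ae_le mC (S_mem hS czB)).
apply: (aeS (S_abs_le hS hP (c0_xB cx) czB (fun n => lexx _))) => w h.
exact: le_trans h (ler_norm _).
Qed.


Lemma zB_ge0 x n : 0 <= zB x n.
Proof. exact: normr_ge0. Qed.

Lemma zB_bd {x} : c0 x -> c0norm x <= 1 -> forall n, `|x0 n| + rho * zB x n <= 1.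
Proof.
move=> cx nx n; rewrite /zB /xB; case: ifPn => h.
  by rewrite normr0 mulr0 addr0 x0_le1.
move: h; rewrite negb_or /Ap /Am -!leNgt => /andP[h1 h2].
have hx : rho * `|x n| <= rho by rewrite -[X in _ <= X]mulr1 ler_wpM2l ?(ltW rho0) // (le_trans (c0norm_ub n cx)).
move: hx; set t := rho * `|x n| => hx.
case: (lerP 0 (x0 n)) => h; [rewrite ger0_norm // | rewrite ltr0_norm //]; rl.
Qed.

Variables (delta : R -> R) (hU : unif_monotone_with Y delta) (e1 : R) (e10 : 0 < e1)
  (eta : R) (heta : eta * (1 + delta e1) <= delta e1) (hN : 1 - eta < nrm (S x0)) (eta1 : eta < 1).

Definition N := nrm (S ax0).
Definition N0 := nrm (S x0).

Lemma N0_le_N : N0 <= N.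
Proof.
apply: (nrm_ae_le (S_mem hS cx0) (S_mem hS c0_ax0)).
apply: (aeS (S_abs_le hS hP cx0 c0_ax0 (fun n => lexx _))) => w h.
exact: le_trans h (ler_norm _).
Qed.

Lemma N_le1 : N <= 1.
Proof.
rewrite -hSn; apply: (opnorm_ub hS c0_ax0).
by apply: c0norm_le => n; rewrite /ax0 normr_id x0_le1.
Qed.

Lemma N0_pos : 0 < N0.
Proof. have := hN; have := eta1; rewrite /N0; lra. Qed.

Lemma N_pos : 0 < N.
Proof. exact: lt_le_trans N0_pos N0_le_N. Qed.

Lemma D_pos : 0 < delta e1.
Proof. by case: hU => h _; apply: h. Qed.

Lemma inv_N0 : N0^-1 <= 1 + delta e1.
Proof.
have D0 := D_pos; have := heta; have := hN; have := eta1; rewrite -/N0 => h1 h2 h3.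
rewrite -[N0^-1]mul1r ler_pdivrMr ?N0_pos //.
nra.
Qed.

Lemma UM1 z : c0 z -> (forall n, 0 <= z n) -> (forall n, `|x0 n| + rho * z n <= 1) ->
  nrm (S z) <= e1 / rho.
Proof.
move=> cz z0 zb.
have Np := N_pos; have N1 := N_le1.
have Ni : 0 < N^-1 by rewrite invr_gt0.
have mX : mem (fun w => N^-1 * S ax0 w) by apply: bfs_memZ (S_mem hS c0_ax0).
have mY : mem (fun w => (N^-1 * rho) * S z w) by apply: bfs_memZ (S_mem hS cz).
have nX : nrm (fun w => N^-1 * S ax0 w) = 1.
  by rewrite (bfs_nrmZ N^-1 (S_mem hS c0_ax0)) (gtr0_norm Ni) mulVf // gt_eqF.
have aX : {ae mu, forall w, 0 <= N^-1 * S ax0 w}.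
  apply: (aeS (S_ge0 hP c0_ax0 (fun n => normr_ge0 _))) => w h.
  by rewrite mulr_ge0 // ltW.
have aY : {ae mu, forall w, 0 <= (N^-1 * rho) * S z w}.
  apply: (aeS (S_ge0 hP cz z0)) => w h.
  by rewrite mulr_ge0 // mulr_ge0 // ltW.
have ccz : c0 (fun n => 1 * ax0 n + rho * z n) by apply: c0D; apply: c0Z; [exact: c0_ax0 | exact: cz].
have mcz := S_mem hS ccz.
have nXY : nrm (fun w => N^-1 * S ax0 w + (N^-1 * rho) * S z w) <= 1 + delta e1.
  rewrite (nrm_ae_eq (bfs_memD mX mY) (bfs_memZ N^-1 mcz)); last first.
    apply: (aeS (S_lin hS 1 rho c0_ax0 cz)) => w ->.
    by rewrite mul1r mulrDr mulrA.
  rewrite (bfs_nrmZ N^-1 mcz) (gtr0_norm Ni).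
  apply: le_trans inv_N0.
  rewrite (@le_trans _ _ N^-1) //.
    rewrite -[X in _ <= X]mulr1 ler_wpM2l ?(ltW Ni) //.
    have hc : c0norm (fun n => 1 * ax0 n + rho * z n) <= 1.
      apply: c0norm_le => n.
      by rewrite mul1r ger0_norm ?zb // addr_ge0 ?normr_ge0 // mulr_ge0 ?z0 // ltW.
    by have := opnorm_ub hS ccz hc; rewrite hSn.
  by rewrite lef_pV2 ?N0_le_N // posrE ?N0_pos ?Np.
have := hU.2 e1 _ _ e10 mX nX mY aX aY nXY.
rewrite (bfs_nrmZ (N^-1 * rho) (S_mem hS cz)) gtr0_norm ?mulr_gt0 //.
rewrite ler_pdivlMr //.
move=> h; have sS : 0 <= nrm (S z) by apply: bfs_nrm_ge0 (S_mem hS cz).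
have e : N * N^-1 = 1 by rewrite mulfV // gt_eqF.
have -> : nrm (S z) * rho = N * (N^-1 * rho * nrm (S z)) by rewrite !mulrA e mul1r mulrC.
have t0 : 0 <= N^-1 * rho * nrm (S z) by rewrite !mulr_ge0 // ltW.
move: h t0; set t := N^-1 * rho * nrm (S z) => h t0; nra.
Qed.


Lemma UM2 : nrm m <= e1.
Proof.
have Np := N0_pos; have N1 : N0 <= 1 := le_trans N0_le_N N_le1.
have Ni : 0 < N0^-1 by rewrite invr_gt0.
have mg' : mem g := S_mem hS cx0.
have mX : mem (fun w => N0^-1 * `|g w|) by apply: bfs_memZ (mem_abs mg').
have mY : mem (fun w => (N0^-1 * 2) * m w) by apply: bfs_memZ mem_m.
have nX : nrm (fun w => N0^-1 * `|g w|) = 1.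
  by rewrite (bfs_nrmZ N0^-1 (mem_abs mg')) (gtr0_norm Ni) (nrm_abs mg') mulVf // gt_eqF.
have aX : {ae mu, forall w, 0 <= N0^-1 * `|g w|}.
  by apply: aeW => w; rewrite mulr_ge0 // ltW.
have aY : {ae mu, forall w, 0 <= (N0^-1 * 2) * m w}.
  by apply: (aeS m_ge0) => w h; apply: mulr_ge0 => //; apply: mulr_ge0 => //; exact: ltW.
have mA := S_mem hS c0_ax0.
have nXY : nrm (fun w => N0^-1 * `|g w| + (N0^-1 * 2) * m w) <= 1 + delta e1.
  rewrite (nrm_ae_eq (bfs_memD mX mY) (bfs_memZ N0^-1 mA)); last first.
    apply: (aeS sum_split) => w ->.
    by rewrite /m /m2 /m1; field; rewrite lt0r_neq0.
  rewrite (bfs_nrmZ N0^-1 mA) (gtr0_norm Ni).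
  apply: le_trans inv_N0.
  by rewrite -[X in _ <= X]mulr1 ler_wpM2l ?(ltW Ni) // N_le1.
have := hU.2 e1 _ _ e10 mX nX mY aX aY nXY.
rewrite (bfs_nrmZ (N0^-1 * 2) mem_m) gtr0_norm ?mulr_gt0 //.
move=> h; have sS : 0 <= nrm m by apply: bfs_nrm_ge0 mem_m.
have e : N0 * N0^-1 = 1 by rewrite mulfV // gt_eqF.
have -> : nrm m = 2^-1 * N0 * (N0^-1 * 2 * nrm m).
  by field; rewrite lt0r_neq0.
have t0 : 0 <= N0^-1 * 2 * nrm m by apply: mulr_ge0 => //; apply: mulr_ge0 => //; exact: ltW.
move: h t0; set t := N0^-1 * 2 * nrm m => h t0.
have := e10; nra.
Qed.


Definition K := 2 * ((1 - rho)^-1 * e1) + e1 / rho.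

Lemma diffK {x} : c0 x -> c0norm x <= 1 -> nrm (fun w => hx x w - S x w) <= K.
Proof.
move=> cx nx; apply: le_trans (diff_bound cx nx) _.
have ri : 0 < (1 - rho)^-1 by rewrite invr_gt0.
apply: lerD.
  by rewrite ler_pM2l // ler_wpM2l ?(ltW ri) // UM2.
apply: UM1; first exact: c0_abs (c0_xB cx).
  exact: zB_ge0.
exact: zB_bd.
Qed.

Lemma c_ge : N0 - K <= c.
Proof.
have h1 := nrmB (mem_hx cx0) (memB (mem_hx cx0) (S_mem hS cx0)).
have E : (fun w => hx x0 w - (hx x0 w - S x0 w)) = S x0.
  by apply: funext => w; rewrite opprB addrC subrK.
rewrite E in h1.
have h2 := nrm_hx cx0; rewrite nx0 mul1r in h2.
have h3 : c0norm x0 <= 1 by rewrite nx0.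
have h4 := diffK cx0 h3.
rewrite /N0; lra.
Qed.

Definition oA := fun n => oAp n + oAm n.

Lemma c0_oA : c0 oA.
Proof. exact: c0D c0_oAp c0_oAm. Qed.

Lemma oA_le n : `|oA n| <= 1.
Proof.
rewrite /oA /oAp /oAm /rst; case E: (Ap n); case F: (Am n).
- by have := ApAm n E; rewrite F.
- by rewrite addr0 normr1.
- by rewrite add0r normr1.
- by rewrite addr0 normr0.
Qed.

Lemma c_le1 : c <= 1.
Proof.
have mo := S_mem hS c0_oA.
apply: le_trans (_ : nrm (S oA) <= 1).
  apply: (nrm_ae_le mem_hone mo).
  have a1 : {ae mu, forall w, 0 <= S oAp w}.
    by apply: (S_ge0 hP c0_oAp) => n; rewrite /oAp /rst; case: (Ap n).
  have a2 : {ae mu, forall w, 0 <= S oAm w}.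
    by apply: (S_ge0 hP c0_oAm) => n; rewrite /oAm /rst; case: (Am n).
  apply: (aeS2 (aeS2 a1 a2 (fun w a b => conj a b)) (S_add hS c0_oAp c0_oAm)) => w [b1 b2] e.
  rewrite /oA e /hx.
  have hp := p_ge0 w; have hq := q_ge0 w; have hpq := pq w.
  have k1 : p w * S (rst Ap one) w <= S oAp w.
    by rewrite -[X in _ <= X]mul1r ler_wpM2r // -hpq lerDl.
  have k2 : q w * S (rst Am one) w <= S oAm w.
    by rewrite -[X in _ <= X]mul1r ler_wpM2r // -hpq lerDr.
  rewrite ger0_norm ?addr_ge0 ?mulr_ge0 // ger0_norm ?addr_ge0 //.
  exact: lerD.
have hc : c0norm oA <= 1 by apply: c0norm_le oA_le.
by have := opnorm_ub hS c0_oA hc; rewrite hSn.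
Qed.


Variable hK : eta + K < 1.

Lemma c_pos : 0 < c.
Proof. have := c_ge; have := hK; have := hN; rewrite /N0; lra. Qed.

Definition Top x := fun w => c^-1 * hx x w.

Lemma ci_ge1 : 1 <= c^-1.
Proof. by rewrite -[X in _ <= X]mul1r ler_pdivlMr ?c_pos // mul1r c_le1. Qed.

Lemma nrm_Top {x} : c0 x -> nrm (Top x) <= c0norm x.
Proof.
move=> cx; have cp := c_pos.
rewrite (bfs_nrmZ c^-1 (mem_hx cx)) gtr0_norm ?invr_gt0 //.
rewrite ler_pdivrMl //; rewrite mulrC; exact: nrm_hx.
Qed.

Lemma Top_op : is_op Y Top.
Proof.
split; first by move=> x cx; apply: bfs_memZ (mem_hx cx).
split; last by exists 1 => x cx; rewrite mul1r nrm_Top.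
move=> a b x y cx cy; rewrite /Top /hx !rst_lin.
apply: (aeS2 (S_lin hS a b (c0_rst Ap cx) (c0_rst Ap cy)) (S_lin hS a b (c0_rst Am cx) (c0_rst Am cy))).
by move=> w -> ->; ring.
Qed.

Lemma Top_pos : is_pos_op (mu := mu) Top.
Proof.
move=> x cx x0' ; have cp := c_pos.
have r1 : forall P, forall n, 0 <= rst P x n by move=> P n; rewrite /rst; case: (P n).
apply: (aeS2 (S_ge0 hP (c0_rst Ap cx) (r1 Ap)) (S_ge0 hP (c0_rst Am cx) (r1 Am))) => w a b.
rewrite /Top /hx mulr_ge0 ?invr_ge0 ?(ltW cp) // addr_ge0 // mulr_ge0 ?p_ge0 ?q_ge0 //.
Qed.

Lemma Top_u0 : nrm (Top u0) = 1.
Proof.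
have cp := c_pos.
rewrite (bfs_nrmZ c^-1 (mem_hx c0_u0)) gtr0_norm ?invr_gt0 // nrm_hu0 mulVf //.
exact: lt0r_neq0.
Qed.

Lemma Top_norm : opnorm Y Top = 1.
Proof.
apply/le_anti/andP; split.
  apply: opnorm_le => x cx nx; exact: le_trans (nrm_Top cx) nx.
rewrite -{1}Top_u0; apply: (opnorm_ub Top_op c0_u0).
by rewrite nu0.
Qed.

Lemma Top_S : opnorm Y (fun x w => Top x w - S x w) <= 1 - c + K.
Proof.
apply: opnorm_le => x cx nx.
have cp := c_pos; have c1 := ci_ge1; have cl := c_le1.
have E : (fun w => Top x w - S x w) = (fun w => (c^-1 - 1) * hx x w + (hx x w - S x w)).
  by apply: funext => w; rewrite /Top; ring.
rewrite E.
have m1' : mem (fun w => (c^-1 - 1) * hx x w) by apply: bfs_memZ (mem_hx cx).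
have m2' := memB (mem_hx cx) (S_mem hS cx).
apply: le_trans (bfs_nrmD m1' m2') _.
rewrite (bfs_nrmZ _ (mem_hx cx)) ger0_norm ?subr_ge0 //.
have h1 := nrm_hx cx; have h2 := diffK cx nx.
have h3 : nrm (hx x) <= c by apply: le_trans h1 _; rewrite -[X in _ <= X]mul1r ler_wpM2r // ltW.
have h4 : (c^-1 - 1) * nrm (hx x) <= (c^-1 - 1) * c by rewrite ler_wpM2l ?subr_ge0.
have e : (c^-1 - 1) * c = 1 - c by rewrite mulrBl mulVf ?lt0r_neq0 // mul1r.
rewrite e in h4; move: h4 h2; set t := (c^-1 - 1) * nrm (hx x) => h4 h2.
lra.
Qed.


Lemma main_result : exists (u : nat -> R) (Op : (nat -> R) -> T -> R),
  c0 u /\ c0norm u = 1 /\ is_op Y Op /\ is_pos_op (mu := mu) Op /\ opnorm Y Op = 1 /\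
  nrm (Op u) = 1 /\ c0norm (fun n => u n - x0 n) <= rho /\
  opnorm Y (fun x w => Op x w - S x w) < eta + 2 * K.
Proof.
exists u0, Top.
split; first exact: c0_u0.
split; first exact: nu0.
split; first exact: Top_op.
split; first exact: Top_pos.
split; first exact: Top_norm.
split; first exact: Top_u0.
split; first exact: u0_x0.
have h1 := Top_S; have h2 := c_ge; have := hN; rewrite /N0 in h2 *; lra.
Qed.

End Main.

Lemma K_bound (R : realType) (e : R) : 0 < e -> e < 1 -> K R (e / 2) (e ^+ 2 / 20) <= 3 * e / 10.
Proof.
move=> e0 e1; rewrite /K.
have h1 : e ^+ 2 / 20 / (e / 2) = e / 10.
  by field; rewrite lt0r_neq0.
have h2 : (1 - e / 2)^-1 * (e ^+ 2 / 20) <= e / 10.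
  rewrite ler_pdivrMl; last lra.
  rewrite expr2; nra.
rewrite h1; lra.
Qed.

Theorem theorem3p2 (R : realType) (delta : R -> R) :
  (forall e : R, 0 < e -> 0 < delta e) ->
  exists eta : R -> R,
    (forall e : R, 0 < e < 1 -> 0 < eta e < e) /\
    forall (d : measure_display) (T : measurableType d)
           (mu : {measure set T -> \bar R}) (Y : BFS mu),
      unif_monotone_with Y delta -> BPBp_pos_with Y eta.
Proof.
move=> hd.
pose eta e := Num.min (e / 4) (delta (e ^+ 2 / 20) / (1 + delta (e ^+ 2 / 20))).
have eta_le1 e : eta e <= e / 4 by rewrite /eta ge_min lexx.
have eta_le2 e : eta e <= delta (e ^+ 2 / 20) / (1 + delta (e ^+ 2 / 20)).
  by rewrite /eta ge_min lexx orbT.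
have eta_pos e : 0 < e -> 0 < eta e.
  move=> e0; have e20 : 0 < e ^+ 2 / 20 by rewrite divr_gt0 // exprn_gt0.
  have D0 := hd _ e20.
  rewrite /eta lt_min; apply/andP; split; first by rewrite divr_gt0.
  by rewrite divr_gt0 // ltr_wpDr // ltW.
exists eta; split.
  move=> e /andP[e0 e1]; apply/andP; split; first exact: eta_pos.
  by apply: le_lt_trans (eta_le1 e) _; lra.
move=> d T mu Y hU e /andP[e0 e1] S x0 hS hP hSn cx0 nx0 hN.
have e20 : 0 < e ^+ 2 / 20 by rewrite divr_gt0 // exprn_gt0.
have D0 := hd _ e20.
have rho0 : 0 < e / 2 by rewrite divr_gt0.
have rho2 : 2 * (e / 2) <= 1 by lra.
have heta : eta e * (1 + delta (e ^+ 2 / 20)) <= delta (e ^+ 2 / 20).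
  by rewrite -ler_pdivlMr ?eta_le2 // ltr_wpDr // ltW.
have hKb := @K_bound R e e0 e1.
have he1 := eta_le1 e.
have eta1 : eta e < 1 by lra.
have hK : eta e + K R (e / 2) (e ^+ 2 / 20) < 1 by lra.
have [u [Op [cu [nu [hO [hOp [hOn [hOu [hux hOS]]]]]]]]] :=
  @main_result _ _ _ _ _ _ hS hP hSn _ cx0 nx0 _ rho0 rho2 _ hU _ e20 _ heta hN eta1 hK.
exists u, Op; do 6!(split => //).
split; first by apply: le_lt_trans hux _; lra.
by apply: lt_le_trans hOS _; lra.
Qed.
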